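(* There exists a closed convex cone $\mathcal{K}\subseteq \mathbb{R}^4$ that is nice but not amenable.
   Context: A face of a closed convex set $C$ is a closed convex subset $F\subseteq C$ such that whenever $x,y\in C$ and $\alpha x+(1-\alpha)y\in F$ for some $\alpha\in(0,1)$, then $x,y\in F$. For a set $S$, $\mathcal{K}^*$ denotes the dual cone $\{y: \langle y,x\rangle\ge 0\ \forall x\in\mathcal{K}\}$ and $S^\perp$ the orthogonal complement. A closed convex cone $\mathcal{K}$ is nice (facially dual complete) if $\mathcal{F}^*=\mathcal{K}^*+\mathcal{F}^\perp$ for every face $\mathcal{F}$ of $\mathcal{K}$. A face $F$ of a closed convex set $C$ is amenable if for every bounded set $B$ there exists $\kappa>0$ such that $\operatorname{dist}(x,F)\le\kappa\operatorname{dist}(x,C)$ for all $x\in(\operatorname{aff}F)\cap B$; $C$ is amenable if all its faces are amenable. (For a cone this is equivalent to: for each face $\mathcal{F}$ there is $\kappa>0$ with $\operatorname{dist}(x,\mathcal{F})\le\kappa\operatorname{dist}(x,\mathcal{K})$ for all $x\in\operatorname{span}\mathcal{F}$.) *)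

(* Defs.v *)
From mathcomp Require Import all_boot all_order all_algebra.
From mathcomp Require Import all_classical all_reals all_analysis.
From mathcomp Require Import Rstruct Rstruct_topology.
Set Implicit Arguments. Unset Strict Implicit. Unset Printing Implicit Defensive.
Import Order.TTheory GRing.Theory Num.Theory numFieldNormedType.Exports.
Local Open Scope classical_set_scope.
Local Open Scope ring_scope.

Section ConeDefs.
Variables (R : realType) (n : nat).
Notation V := 'rV[R]_n.

Definition dotv (x y : V) : R := \sum_(i < n) x ord0 i * y ord0 i.
Definition enorm (x : V) : R := Num.sqrt (dotv x x).

(* Euclidean distance to a set (inf of the empty set is 0 by convention) *)
Definition edist (x : V) (S : set V) : R := inf [set enorm (x - y) | y in S].

Definition convex_set (C : set V) : Prop :=
  forall x y (a : R), C x -> C y -> 0 <= a -> a <= 1 -> C (a *: x + (1 - a) *: y).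

Definition is_cone (K : set V) : Prop :=
  K 0 /\ forall x (t : R), K x -> 0 <= t -> K (t *: x).

Definition closed_convex_cone (K : set V) : Prop :=
  closed K /\ convex_set K /\ is_cone K.

Definition is_face (C F : set V) : Prop :=
  F `<=` C /\ closed F /\ convex_set F /\
  forall x y (a : R), C x -> C y -> 0 < a -> a < 1 ->
    F (a *: x + (1 - a) *: y) -> F x /\ F y.

Definition dual_cone (S : set V) : set V := [set y | forall x, S x -> 0 <= dotv y x].
Definition orth (S : set V) : set V := [set y | forall x, S x -> dotv y x = 0].
Definition msum (A B : set V) : set V := [set a + b | a in A & b in B].

Definition nice (K : set V) : Prop :=
  forall F, is_face K F -> dual_cone F = msum (dual_cone K) (orth F).

Definition aff (S : set V) : set V :=
  [set x | exists (k : nat) (l : 'I_k -> R) (y : 'I_k -> V),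
     (forall i, S (y i)) /\ \sum_(i < k) l i = 1 /\ x = \sum_(i < k) l i *: y i].

Definition bounded_set (B : set V) : Prop := exists M : R, forall x, B x -> enorm x <= M.

Definition amenable_face (C F : set V) : Prop :=
  forall B, bounded_set B -> exists kappa : R, 0 < kappa /\
    forall x, aff F x -> B x -> edist x F <= kappa * edist x C.

Definition amenable (C : set V) : Prop :=
  forall F, is_face C F -> amenable_face C F.

End ConeDefs.

(* Main.v *)
Require Import Defs.
From mathcomp Require Import all_boot all_order all_algebra.
From mathcomp Require Import all_classical all_reals all_analysis.
From mathcomp Require Import Rstruct Rstruct_topology.
From mathcomp Require Import ring lra.
Require Import Defs.
Set Implicit Arguments. Unset Strict Implicit. Unset Printing Implicit Defensive.
Import Order.TTheory GRing.Theory Num.Theory numFieldNormedType.Exports.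
Local Open Scope classical_set_scope.
Local Open Scope ring_scope.

(* K = K1 + K2 in R^4 (coordinates x,y,z,t):
   K1 = {z = 0, x^2 + y^2 <= t^2, t >= 0}  (cone over a disk)
   K2 = {x = t >= 0, z >= 0, y^4 <= z t^3}  (cone over a quartic region)
   K is closed, convex, nice, and the face K1 is not amenable. *)

Section Basics.
Variable R : realType.
Notation V := 'rV[R]_4.
Definition i0 : 'I_4 := @Ordinal 4 0 isT.
Definition i1 : 'I_4 := @Ordinal 4 1 isT.
Definition i2 : 'I_4 := @Ordinal 4 2 isT.
Definition i3 : 'I_4 := @Ordinal 4 3 isT.
Definition cX (v : V) := v ord0 i0.
Definition cY (v : V) := v ord0 i1.
Definition cZ (v : V) := v ord0 i2.
Definition cT (v : V) := v ord0 i3.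
Definition mk4 (a b c d : R) : V := \row_(i < 4) nth 0 [:: a; b; c; d] i.

Lemma mk4X a b c d : cX (mk4 a b c d) = a. Proof. by rewrite /cX mxE. Qed.
Lemma mk4Y a b c d : cY (mk4 a b c d) = b. Proof. by rewrite /cY mxE. Qed.
Lemma mk4Z a b c d : cZ (mk4 a b c d) = c. Proof. by rewrite /cZ mxE. Qed.
Lemma mk4T a b c d : cT (mk4 a b c d) = d. Proof. by rewrite /cT mxE. Qed.

Lemma vecP (u v : V) : cX u = cX v -> cY u = cY v -> cZ u = cZ v -> cT u = cT v -> u = v.
Proof.
move=> hx hy hz ht; apply/rowP => i.
case: i => [[|[|[|[|k]]]] Hi].
- by have -> : Ordinal Hi = i0 by apply: val_inj.
- by have -> : Ordinal Hi = i1 by apply: val_inj.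
- by have -> : Ordinal Hi = i2 by apply: val_inj.
- by have -> : Ordinal Hi = i3 by apply: val_inj.
- by [].
Qed.

Lemma cXD u v : cX (u + v) = cX u + cX v. Proof. by rewrite /cX mxE. Qed.
Lemma cYD u v : cY (u + v) = cY u + cY v. Proof. by rewrite /cY mxE. Qed.
Lemma cZD u v : cZ (u + v) = cZ u + cZ v. Proof. by rewrite /cZ mxE. Qed.
Lemma cTD u v : cT (u + v) = cT u + cT v. Proof. by rewrite /cT mxE. Qed.
Lemma cXZ a u : cX (a *: u) = a * cX u. Proof. by rewrite /cX mxE. Qed.
Lemma cYZ a u : cY (a *: u) = a * cY u. Proof. by rewrite /cY mxE. Qed.
Lemma cZZ a u : cZ (a *: u) = a * cZ u. Proof. by rewrite /cZ mxE. Qed.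
Lemma cTZ a u : cT (a *: u) = a * cT u. Proof. by rewrite /cT mxE. Qed.
Lemma cXN u : cX (- u) = - cX u. Proof. by rewrite /cX mxE. Qed.
Lemma cYN u : cY (- u) = - cY u. Proof. by rewrite /cY mxE. Qed.
Lemma cZN u : cZ (- u) = - cZ u. Proof. by rewrite /cZ mxE. Qed.
Lemma cTN u : cT (- u) = - cT u. Proof. by rewrite /cT mxE. Qed.
Lemma cX0 : cX (0 : V) = 0. Proof. by rewrite /cX mxE. Qed.
Lemma cY0 : cY (0 : V) = 0. Proof. by rewrite /cY mxE. Qed.
Lemma cZ0 : cZ (0 : V) = 0. Proof. by rewrite /cZ mxE. Qed.
Lemma cT0 : cT (0 : V) = 0. Proof. by rewrite /cT mxE. Qed.

Definition cE := (mk4X, mk4Y, mk4Z, mk4T, cXD, cYD, cZD, cTD, cXZ, cYZ, cZZ, cTZ,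
  cXN, cYN, cZN, cTN, cX0, cY0, cZ0, cT0).

Lemma dotE (u v : V) : dotv u v = cX u * cX v + cY u * cY v + cZ u * cZ v + cT u * cT v.
Proof. rewrite /dotv !big_ord_recr big_ord0 /= add0r.
rewrite /cX /cY /cZ /cT; congr (_ + _ + _ + _ ); congr (_ * _); congr (_ _ _); exact: val_inj. Qed.

End Basics.

Section Alg.
Variable R : realType.

Lemma sq_le (a b : R) : 0 <= b -> a^+2 <= b^+2 -> a <= b.
Proof. move=> hb h; rewrite leNgt; apply/negP => hab. nra. Qed.

Lemma rot_add (y1 y2 w1 w2 t1 t2 : R) : 0 <= w1 -> 0 <= w2 -> 0 <= t1 -> 0 <= t2 ->
  y1^+2 <= w1 * t1 -> y2^+2 <= w2 * t2 -> (y1 + y2)^+2 <= (w1 + w2) * (t1 + t2).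
Proof.
move=> hw1 hw2 ht1 ht2 h1 h2.
have h3 : (y1 * y2)^+2 <= (w1 * t2) * (w2 * t1).
  rewrite exprMn; have := ler_pM (sqr_ge0 y1) (sqr_ge0 y2) h1 h2.
  by move=> /le_trans; apply; rewrite le_eqVlt; apply/orP; left; apply/eqP; ring.
have h4 : 2 * (y1 * y2) <= w1 * t2 + w2 * t1.
  have hp : 0 <= w1 * t2 by apply: mulr_ge0.
  have hq : 0 <= w2 * t1 by apply: mulr_ge0.
  apply: sq_le; first lra.
  have := sqr_ge0 (w1 * t2 - w2 * t1). nra.
nra.
Qed.

Lemma lor_add (x1 y1 t1 x2 y2 t2 : R) : 0 <= t1 -> 0 <= t2 ->
  x1^+2 + y1^+2 <= t1^+2 -> x2^+2 + y2^+2 <= t2^+2 ->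
  (x1 + x2)^+2 + (y1 + y2)^+2 <= (t1 + t2)^+2.
Proof.
move=> ht1 ht2 h1 h2.
have h3 : (x1 * x2 + y1 * y2)^+2 <= (t1 * t2)^+2.
  have e : (x1 * x2 + y1 * y2)^+2 = (x1^+2 + y1^+2) * (x2^+2 + y2^+2) - (x1*y2 - x2*y1)^+2 by ring.
  rewrite e exprMn.
  have := ler_pM (addr_ge0 (sqr_ge0 x1) (sqr_ge0 y1)) (addr_ge0 (sqr_ge0 x2) (sqr_ge0 y2)) h1 h2.
  have := sqr_ge0 (x1*y2 - x2*y1). lra.
have h4 : x1 * x2 + y1 * y2 <= t1 * t2.
  have hp : 0 <= t1 * t2 by apply: mulr_ge0.
  by apply: sq_le.
nra.
Qed.

Lemma quart_add (y1 y2 z1 z2 t1 t2 : R) : 0 <= z1 -> 0 <= z2 -> 0 <= t1 -> 0 <= t2 ->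
  y1^+4 <= z1 * t1^+3 -> y2^+4 <= z2 * t2^+3 -> (y1 + y2)^+4 <= (z1 + z2) * (t1 + t2)^+3.
Proof.
move=> hz1 hz2 ht1 ht2 h1 h2.
pose w1 := Num.sqrt (z1 * t1); pose w2 := Num.sqrt (z2 * t2).
have hw1 : 0 <= w1 by apply: sqrtr_ge0.
have hw2 : 0 <= w2 by apply: sqrtr_ge0.
have ew1 : w1^+2 = z1 * t1 by rewrite sqr_sqrtr // mulr_ge0.
have ew2 : w2^+2 = z2 * t2 by rewrite sqr_sqrtr // mulr_ge0.
have g1 : y1^+2 <= w1 * t1.
  have : (y1^+2)^+2 <= (w1 * t1)^+2.
    by rewrite -exprM /= exprMn ew1; apply: (le_trans h1); rewrite le_eqVlt; apply/orP; left; apply/eqP; ring.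
  by rewrite ler_sqr ?nnegrE ?sqr_ge0 ?mulr_ge0.
have g2 : y2^+2 <= w2 * t2.
  have : (y2^+2)^+2 <= (w2 * t2)^+2.
    by rewrite -exprM /= exprMn ew2; apply: (le_trans h2); rewrite le_eqVlt; apply/orP; left; apply/eqP; ring.
  by rewrite ler_sqr ?nnegrE ?sqr_ge0 ?mulr_ge0.
have Y := rot_add hw1 hw2 ht1 ht2 g1 g2.
have e1 : w1^+2 <= z1 * t1 by rewrite ew1.
have e2 : w2^+2 <= z2 * t2 by rewrite ew2.
have W := rot_add hz1 hz2 ht1 ht2 e1 e2.
have s1 : ((y1 + y2)^+2)^+2 <= ((w1 + w2) * (t1 + t2))^+2.
  by rewrite ler_sqr ?nnegrE ?sqr_ge0 ?mulr_ge0 ?addr_ge0.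
have -> : (y1 + y2)^+4 = ((y1 + y2)^+2)^+2 by rewrite -exprM.
apply: (le_trans s1); rewrite exprMn.
have -> : (z1 + z2) * (t1 + t2) ^+ 3 = ((z1 + z2) * (t1 + t2)) * (t1 + t2)^+2 by ring.
by apply: ler_wpM2r => //; rewrite sqr_ge0.
Qed.
End Alg.

Section Cones.
Variable R : realType.
Notation V := 'rV[R]_4.

Definition K1 : set V := [set v | cZ v = 0 /\ 0 <= cT v /\ cX v ^+ 2 + cY v ^+ 2 <= cT v ^+ 2].
Definition K2 : set V := [set v | cX v = cT v /\ 0 <= cT v /\ 0 <= cZ v /\ cY v ^+ 4 <= cZ v * cT v ^+ 3].
Definition Kc : set V := [set a + b | a in K1 & b in K2].

Lemma K1D u v : K1 u -> K1 v -> K1 (u + v).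
Proof.
move=> [z1 [t1 h1]] [z2 [t2 h2]]; rewrite /K1 /= !cE z1 z2 addr0; split=> //; split.
  exact: addr_ge0.
exact: lor_add.
Qed.

Lemma K1Z a u : 0 <= a -> K1 u -> K1 (a *: u).
Proof.
move=> ha [z1 [t1 h1]]; rewrite /K1 /= !cE z1 mulr0; split=> //; split.
  exact: mulr_ge0.
rewrite !exprMn -mulrDr; apply: ler_wpM2l => //; exact: sqr_ge0.
Qed.

Lemma K2D u v : K2 u -> K2 v -> K2 (u + v).
Proof.
move=> [x1 [t1 [z1 h1]]] [x2 [t2 [z2 h2]]]; rewrite /K2 /= !cE x1 x2; split=> //; split.
  exact: addr_ge0.
split; first exact: addr_ge0.
exact: quart_add.
Qed.

Lemma K2Z a u : 0 <= a -> K2 u -> K2 (a *: u).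
Proof.
move=> ha [x1 [t1 [z1 h1]]]; rewrite /K2 /= !cE x1; split=> //; split.
  exact: mulr_ge0.
split; first exact: mulr_ge0.
have -> : (a * cY u) ^+ 4 = a^+4 * cY u ^+ 4 by rewrite exprMn.
have -> : a * cZ u * (a * cT u) ^+ 3 = a^+4 * (cZ u * cT u ^+ 3) by ring.
by apply: ler_wpM2l => //; rewrite exprn_ge0.
Qed.

Lemma K1_0 : K1 0. Proof. by rewrite /K1 /= !cE; lra. Qed.
Lemma K2_0 : K2 0. Proof. by rewrite /K2 /= !cE; split. Qed.

Lemma K1_K u : K1 u -> Kc u.
Proof. by move=> h; exists u => //; exists 0; [exact: K2_0 | rewrite addr0]. Qed.
Lemma K2_K u : K2 u -> Kc u.
Proof. by move=> h; exists 0; [exact: K1_0 | exists u => //; rewrite add0r]. Qed.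

Lemma KD u v : Kc u -> Kc v -> Kc (u + v).
Proof.
move=> [a1 ha1 [b1 hb1 <-]] [a2 ha2 [b2 hb2 <-]].
exists (a1 + a2); first exact: K1D.
exists (b1 + b2); first exact: K2D.
by rewrite addrACA.
Qed.

Lemma KZ a u : 0 <= a -> Kc u -> Kc (a *: u).
Proof.
move=> ha [a1 ha1 [b1 hb1 <-]].
exists (a *: a1); first exact: K1Z.
exists (a *: b1); first exact: K2Z.
by rewrite scalerDr.
Qed.

Lemma K_convex : convex_set Kc.
Proof.
move=> x y a hx hy ha0 ha1; apply: KD; apply: KZ => //; lra.
Qed.

Lemma K_cone : is_cone Kc.
Proof. split; first exact: K1_K K1_0. by move=> x t hx ht; apply: KZ. Qed.

Lemma dual_K (k : V) : (forall a, K1 a -> 0 <= dotv k a) -> (forall b, K2 b -> 0 <= dotv k b) ->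
  dual_cone Kc k.
Proof.
move=> h1 h2 v [a ha [b hb <-]].
have -> : dotv k (a + b) = dotv k a + dotv k b by rewrite !dotE !cE; ring.
by apply: addr_ge0; [apply: h1|apply: h2].
Qed.
End Cones.
Arguments K1 {R}. Arguments K2 {R}. Arguments Kc {R}.

Section Closed.
Variable R : realType.
Notation V := 'rV[R]_4.

Lemma cX_cont : continuous (@cX R). Proof. exact: coord_continuous. Qed.
Lemma cY_cont : continuous (@cY R). Proof. exact: coord_continuous. Qed.
Lemma cZ_cont : continuous (@cZ R). Proof. exact: coord_continuous. Qed.
Lemma cT_cont : continuous (@cT R). Proof. exact: coord_continuous. Qed.

Lemma contD (f g : V -> R) : continuous f -> continuous g -> continuous (fun v => f v + g v).
Proof. by move=> hf hg x; exact: (continuousD (hf x) (hg x)). Qed.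
Lemma contB (f g : V -> R) : continuous f -> continuous g -> continuous (fun v => f v - g v).
Proof. by move=> hf hg x; exact: (continuousB (hf x) (hg x)). Qed.
Lemma contM (f g : V -> R) : continuous f -> continuous g -> continuous (fun v => f v * g v).
Proof. by move=> hf hg x; exact: (continuousM (hf x) (hg x)). Qed.

Lemma contN (f : V -> R) : continuous f -> continuous (fun v => - f v).
Proof. by move=> hf x; exact: (continuousN (hf x)). Qed.

Lemma closed_ge0 (f : V -> R) : continuous f -> closed [set v | 0 <= f v].
Proof.
move=> hf; have -> : [set v | 0 <= f v] = f @^-1` [set x | 0 <= x] by [].
by apply: preimage_closed; [move=> x _; apply: hf | apply: closed_ge].
Qed.

Lemma closed_eq0 (f : V -> R) : continuous f -> closed [set v | f v = 0].
Proof.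
move=> hf; have -> : [set v | f v = 0] = f @^-1` [set x | x = 0] by [].
by apply: preimage_closed; [move=> x _; apply: hf | apply: closed_eq].
Qed.

Ltac cont := repeat first [ apply: contB | apply: contD | apply: contN | apply: contM | apply: cX_cont
  | apply: cY_cont | apply: cZ_cont | apply: cT_cont | apply: cst_continuous ].

Lemma K1_closed : closed (@K1 R).
Proof.
have -> : @K1 R = [set v | cZ v = 0] `&` ([set v | 0 <= cT v] `&`
   [set v | 0 <= cT v * cT v - (cX v * cX v + cY v * cY v)]).
  by apply/funext => v; apply/propext; rewrite /K1 /= !expr2 subr_ge0.
apply: closedI; first by apply: closed_eq0; cont.
by apply: closedI; apply: closed_ge0; cont.
Qed.

Lemma K2_closed : closed (@K2 R).
Proof.
have -> : @K2 R = [set v | cX v - cT v = 0] `&` ([set v | 0 <= cT v] `&` ([set v | 0 <= cZ v] `&`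
   [set v | 0 <= cZ v * (cT v * (cT v * cT v)) - cY v * (cY v * (cY v * cY v))])).
  apply/funext => v; apply/propext; rewrite /K2 /= subr_ge0 !exprS expr0 !mulr1.
  by split=> [[-> h]|[/eqP h1 h]]; [rewrite subrr | move: h1; rewrite subr_eq0 => /eqP].
apply: closedI; first by apply: closed_eq0; cont.
apply: closedI; first by apply: closed_ge0; cont.
by apply: closedI; apply: closed_ge0; cont.
Qed.

End Closed.

Section ClosedK.
Variable R : realType.
Notation V := 'rV[R]_4.

Lemma coord_le_norm (v : V) i : `|v ord0 i| <= `|v|.
Proof.
rewrite [X in _ <= X]/Num.norm /= mx_normrE.
by apply: le_trans (le_bigmax _ _ (ord0, i)).
Qed.

Lemma norm_le_coord (v : V) (M : R) : 0 <= M -> (forall i, `|v ord0 i| <= M) -> `|v| <= M.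
Proof.
move=> hM h; rewrite [X in X <= _]/Num.norm /= mx_normrE.
apply: bigmax_le => // -[a b] _ /=; rewrite (ord1 a); exact: h.
Qed.

Lemma normX (v : V) : `|cX v| <= `|v|. Proof. exact: coord_le_norm. Qed.
Lemma normY (v : V) : `|cY v| <= `|v|. Proof. exact: coord_le_norm. Qed.
Lemma normZ (v : V) : `|cZ v| <= `|v|. Proof. exact: coord_le_norm. Qed.
Lemma normT (v : V) : `|cT v| <= `|v|. Proof. exact: coord_le_norm. Qed.

Lemma norm_le4 (v : V) (M : R) : 0 <= M -> `|cX v| <= M -> `|cY v| <= M -> `|cZ v| <= M ->
  `|cT v| <= M -> `|v| <= M.
Proof.
move=> hM hx hy hz ht; apply: norm_le_coord => // -[[|[|[|[|k]]]] Hi].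
- by have -> : Ordinal Hi = i0 by apply: val_inj.
- by have -> : Ordinal Hi = i1 by apply: val_inj.
- by have -> : Ordinal Hi = i2 by apply: val_inj.
- by have -> : Ordinal Hi = i3 by apply: val_inj.
- by [].
Qed.

Lemma sum_norm_bound (a b : V) : K1 a -> K2 b -> `|a| <= `|a + b| /\ `|b| <= `|a + b|.
Proof.
move=> [za [ta ha]] [xb [tb [zb hb]]].
set M := `|a + b|.
have hM : 0 <= M by rewrite /M normr_ge0.
have hT : cT a + cT b <= M by rewrite -cTD; exact: (le_trans (ler_norm _) (normT _)).
have hZ : cZ b <= M by have := le_trans (ler_norm _) (normZ (a + b)); rewrite cZD za add0r.
split.
  apply: norm_le4 => //.
  - rewrite ler_norml; apply/andP; split; nra.
  - rewrite ler_norml; apply/andP; split; nra.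
  - by rewrite za normr0.
  - by rewrite ger0_norm //; lra.
apply: norm_le4 => //.
- by rewrite xb ger0_norm //; lra.
- have h4 : cY b ^+ 4 <= M ^+ 4.
    apply: (le_trans hb).
    have h1 : cT b ^+ 3 <= M ^+ 3 by rewrite lerXn2r ?nnegrE //; lra.
    rewrite [M ^+ 4]exprS.
    by apply: ler_pM => //; rewrite exprn_ge0.
  rewrite -(@ler_pXn2r _ 4) ?nnegrE //.
  by rewrite -normrX ger0_norm // exprn_even_ge0.
- by rewrite ger0_norm //.
- by rewrite ger0_norm //; lra.
Qed.


Lemma bset_bounded (A : set V) (r : R) : (forall x, A x -> `|x| <= r) -> [bounded x | x in A].
Proof.
move=> h; exists r; split; first exact: num_real.
move=> M hM x Ax; apply: le_trans (h x Ax) _; exact: ltW.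
Qed.

Lemma Kc_closed : closed (@Kc R).
Proof.
move=> v clv.
pose r := `|v| + 1.
pose P1 := [set a : V | K1 a /\ `|a| <= r].
pose P2 := [set a : V | K2 a /\ `|a| <= r].
have cP1 : compact P1.
  apply: bounded_closed_compact; first by apply: (@bset_bounded _ r) => x [].
  apply: closedI; first exact: K1_closed.
  apply: (@preimage_closed _ _ (fun a : V => `|a|) [set x | x <= r]).
    by move=> x _; exact: norm_continuous.
  exact: closed_le.
have cP2 : compact P2.
  apply: bounded_closed_compact; first by apply: (@bset_bounded _ r) => x [].
  apply: closedI; first exact: K2_closed.
  apply: (@preimage_closed _ _ (fun a : V => `|a|) [set x | x <= r]).
    by move=> x _; exact: norm_continuous.
  exact: closed_le.
have cS : compact [set z.1 + z.2 | z in P1 `*` P2].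
  apply: continuous_compact; last exact: compact_setX.
  apply: continuous_subspaceT => z; exact: add_continuous.
have clS : closed [set z.1 + z.2 | z in P1 `*` P2].
  by apply: compact_closed => //; exact: norm_hausdorff.
have : [set z.1 + z.2 | z in P1 `*` P2] v.
  apply: clS => N Nv.
  have Nv' : nbhs v (N `&` ball v 1) by apply: filterI => //; exact: nbhsx_ballx.
  have [u [[a ha [b hb <-]] [Nu Bu]]] := clv _ Nv'.
  exists (a + b); split => //.
  have hn : `|a + b| <= r.
    move: Bu; rewrite -ball_normE /= => h.
    have := ler_normD v (a + b - v); rewrite addrC subrK => h2.
    rewrite /r; apply: (le_trans h2); rewrite lerD2l; apply: ltW; by rewrite -normrN opprB.
  have [n1 n2] := sum_norm_bound ha hb.
  exists (a, b) => //; split; split => //; exact: le_trans hn.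
move=> [[a b] [[ha _] [hb _]] <-] /=.
by exists a => //; exists b.
Qed.

End ClosedK.

Section NonAmen.
Variable R : realType.
Notation V := 'rV[R]_4.

Lemma quart_le0 (y : R) : y ^+ 4 <= 0 -> y = 0.
Proof.
move=> h; have : y ^+ 4 = 0 by apply: le_anti; rewrite h exprn_even_ge0.
by move/eqP; rewrite expf_eq0 => /andP[_ /eqP].
Qed.

Lemma K_z_ge0 (v : V) : Kc v -> 0 <= cZ v.
Proof. by move=> [a [za _] [b [_ [_ [zb _]]] <-]]; rewrite cZD za add0r. Qed.

Lemma K_z0 (v : V) : Kc v -> cZ v = 0 -> K1 v.
Proof.
move=> [a ha [b hb <-]]; rewrite cZD.
case: (ha) => za _; rewrite za add0r => zb0.
case: hb => xb [tb [_ hb]]; move: hb; rewrite zb0 mul0r => hy.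
have y0 : cY b = 0 by apply: quart_le0.
have hb' : K1 b by rewrite /K1 /= zb0 y0 xb; split => //; split => //; lra.
exact: K1D.
Qed.

Lemma K1_convex : convex_set (@K1 R).
Proof. move=> x y a hx hy h0 h1; apply: K1D; apply: K1Z => //; lra. Qed.

Lemma K1_face : is_face (@Kc R) K1.
Proof.
split; first by move=> v; exact: K1_K.
split; first exact: K1_closed.
split; first exact: K1_convex.
move=> x y a hx hy ha0 ha1 [z _].
have zx := K_z_ge0 hx; have zy := K_z_ge0 hy.
move: z; rewrite !cE => z.
have zx0 : cZ x = 0 by nra.
have zy0 : cZ y = 0 by nra.
by split; apply: K_z0.
Qed.


Lemma enorm_sq (v : V) : enorm v = Num.sqrt (cX v ^+ 2 + cY v ^+ 2 + cZ v ^+ 2 + cT v ^+ 2).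
Proof. by rewrite /enorm dotE !expr2. Qed.

Lemma edist_ub (x : V) (S : set V) (y : V) : S y -> Defs.edist x S <= enorm (x - y).
Proof.
move=> Sy; apply: ge_inf; last by exists y.
by exists 0 => _ [z _ <-]; rewrite /enorm sqrtr_ge0.
Qed.

Lemma edist_lb (x : V) (S : set V) (m : R) (y0 : V) : S y0 ->
  (forall y, S y -> m <= enorm (x - y)) -> m <= Defs.edist x S.
Proof.
move=> Sy0 h; apply: lb_le_inf; first by exists (enorm (x - y0)), y0.
by move=> _ [z Sz <-]; exact: h.
Qed.

Lemma aff_K1 (s : R) : aff K1 (mk4 1 s 0 1).
Proof.
pose l := fun i : 'I_3 => nth (0:R) [:: 1; 1; -1] i.
pose y := fun i : 'I_3 => nth 0 [:: mk4 1 0 0 1; mk4 0 s 0 `|s|; mk4 0 0 0 `|s|] i.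
exists 3, l, y; split.
  move=> [[|[|[|k]]] Hi] //=; rewrite /K1 /= !cE; split => //; split => //.
  - by rewrite expr0n addr0.
  - by rewrite real_normK ?num_real // expr0n add0r.
  - by rewrite real_normK ?num_real // expr0n add0r sqr_ge0.
split; first by rewrite !big_ord_recr big_ord0 /= /l /=; lra.
rewrite !big_ord_recr big_ord0 /= /l /y /=.
apply: vecP; rewrite !cE; lra.
Qed.

Lemma lb_K1 (s : R) (p : V) : 0 < s -> s <= 1 -> K1 p -> s ^+ 2 / 4 <= enorm (mk4 1 s 0 1 - p).
Proof.
move=> s0 s1 [zp [tp hp]].
rewrite enorm_sq !cE zp subrr expr0n /= addr0.
set a := cX p; set b := cY p; set c := cT p.
set D := (1 - a) ^+ 2 + (s - b) ^+ 2 + (1 - c) ^+ 2.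
have hL : (4 - s^+2) * a + 4 * s * b <= (4 + s^+2) * c.
  have e : ((4 - s^+2) * a + 4 * s * b) ^+ 2 + ((4 - s^+2) * b - 4 * s * a)^+2 = (4 + s^+2)^+2 * (a^+2 + b^+2) by ring.
  have h1 : ((4 - s^+2) * a + 4 * s * b) ^+ 2 <= ((4 + s^+2) * c)^+2.
    rewrite exprMn; have := sqr_ge0 ((4 - s^+2) * b - 4 * s * a).
    have : (4 + s^+2)^+2 * (a^+2 + b^+2) <= (4 + s^+2)^+2 * c^+2 by apply: ler_wpM2l => //; exact: sqr_ge0.
    lra.
  apply: sq_le => //; apply: mulr_ge0 => //; have := sqr_ge0 s; lra.
have hLx : 2 * s^+2 <= (4 - s^+2) * (1 - a) + 4 * s * (s - b) + (4 + s^+2) * (c - 1).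
  have -> : (4 - s^+2) * (1 - a) + 4 * s * (s - b) + (4 + s^+2) * (c - 1) =
      2 * s^+2 + ((4 + s^+2) * c - ((4 - s^+2) * a + 4 * s * b)) by ring.
  lra.
have hCS : ((4 - s^+2) * (1 - a) + 4 * s * (s - b) + (4 + s^+2) * (c - 1))^+2 <= 
    ((4 - s^+2)^+2 + (4*s)^+2 + (4 + s^+2)^+2) * D.
  rewrite /D.
  set u1 := 1 - a; set u2 := s - b; set u4 := c - 1.
  have -> : (1 - c) ^+ 2 = u4 ^+ 2 by rewrite /u4; ring.
  set A1 := 4 - s^+2; set A2 := 4 * s; set A4 := 4 + s^+2.
  have := sqr_ge0 (A1 * u2 - A2 * u1); have := sqr_ge0 (A1 * u4 - A4 * u1); have := sqr_ge0 (A2 * u4 - A4 * u2).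
  nra.
have hN : (4 - s^+2)^+2 + (4*s)^+2 + (4 + s^+2)^+2 <= 50.
  have : s^+2 <= 1 by nra.
  have : 0 <= s ^+ 2 by exact: sqr_ge0.
  nra.
have hD0 : 0 <= D by rewrite /D; have := sqr_ge0 (1 - a); have := sqr_ge0 (s - b); have := sqr_ge0 (1 - c); lra.
have hD : (s ^+ 2 / 4) ^+ 2 <= D.
  have h4 : (2 * s^+2)^+2 <= 50 * D.
    apply: le_trans _ (le_trans hCS _); last by apply: ler_wpM2r.
    have hs2 : 0 <= 2 * s^+2 by have := sqr_ge0 s; lra.
    rewrite lerXn2r ?nnegrE //; lra.
  have : 0 <= s ^+ 2 by exact: sqr_ge0.
  move: h4; rewrite !exprMn; nra.
rewrite -(@ger0_norm _ (s^+2/4)); last by apply: divr_ge0 => //; exact: sqr_ge0.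
rewrite -sqrtr_sqr; rewrite ler_sqrt //.
Qed.


Lemma sqrt_le (x b : R) : 0 <= b -> x <= b ^+ 2 -> Num.sqrt x <= b.
Proof.
move=> hb hx; rewrite -(ger0_norm hb) -sqrtr_sqr; exact: ler_wsqrtr.
Qed.

Lemma ub_K (s : R) : 0 <= s -> Defs.edist (mk4 1 s 0 1) Kc <= s ^+ 4.
Proof.
move=> s0.
have hq : Kc (mk4 1 s (s^+4) 1).
  apply: K2_K; rewrite /K2 /= !cE; split => //; split => //; split; first exact: exprn_ge0.
  by rewrite expr1n mulr1.
apply: (le_trans (edist_ub _ hq)).
rewrite enorm_sq !cE !subrr sub0r sqrrN !expr0n /= !add0r addr0.
by rewrite sqrtr_sqr ger0_norm // exprn_ge0.
Qed.

Lemma not_amenable : ~ amenable (@Kc R).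
Proof.
move=> H.
have hB : bounded_set [set v : V | enorm v <= 2] by exists 2 => v.
have [kap [kap0 hk]] := H _ K1_face _ hB.
pose s := (4 * kap + 1)^-1.
have hpos : 0 < 4 * kap + 1 by lra.
have s0 : 0 < s by rewrite invr_gt0.
have s1 : s <= 1 by rewrite /s invf_le1 //; lra.
have hks : 4 * kap * s < 1.
  have e : (4 * kap + 1) * s = 1 by rewrite /s mulfV //; lra.
  nra.
have hx := hk (mk4 1 s 0 1) (aff_K1 s).
have hb : enorm (mk4 1 s 0 1) <= 2.
  rewrite enorm_sq !cE expr0n /= addr0 expr1n.
  apply: sqrt_le => //.
  have : s ^+ 2 <= 1 by nra.
  lra.
have := hx hb.
have lb : s ^+ 2 / 4 <= Defs.edist (mk4 1 s 0 1) K1.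
  apply: (@edist_lb _ _ _ 0); first exact: K1_0.
  by move=> y hy; apply: lb_K1 => //; lra.
have ub := ub_K (ltW s0).
move=> h.
have : s ^+ 2 / 4 <= kap * s ^+ 4.
  apply: (le_trans lb); apply: (le_trans h); apply: ler_wpM2l; lra.
have hs2 : 0 < s ^+ 2 by apply: exprn_gt0.
have : kap * s ^+ 4 < s ^+ 2 / 4.
  have -> : kap * s ^+ 4 = (kap * s ^+ 2) * s ^+ 2 by ring.
  have : kap * s ^+ 2 < 1 / 4.
    have : s ^+ 2 <= s by rewrite expr2; nra.
    nra.
  nra.
lra.
Qed.

End NonAmen.

Section Perturb.
Variable R : realType.

Lemma rot_perturb (Y W T Yq Wq Tq : R) : Y^+2 < W * T -> 0 < W -> 0 < T ->
  0 <= Wq -> 0 <= Tq ->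
  exists2 a0, 0 < a0 & forall a, 0 < a -> a <= a0 ->
    [/\ (Y - a * Yq)^+2 < (W - a * Wq) * (T - a * Tq), 0 < W - a * Wq & 0 < T - a * Tq].
Proof.
move=> h hW hT hWq hTq.
set d := W * T - Y^+2.
have hd : 0 < d by rewrite /d; lra.
set M := `|W * Tq + Wq * T - 2 * Y * Yq| + Yq^+2.
have hM : 0 <= M by rewrite /M; apply: addr_ge0 => //; exact: sqr_ge0.
pose a0 := Num.min (d / (M + 1)) (Num.min (W / (Wq + 1)) (Num.min (T / (Tq + 1)) 1)).
have ha0 : 0 < a0.
  rewrite /a0 !lt_min; apply/andP; split; first by apply: divr_gt0; lra.
  apply/andP; split; first by apply: divr_gt0; lra.
  apply/andP; split => //; apply: divr_gt0; lra.
exists a0 => // a ha haa0.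
have h1 : a <= d / (M + 1) by apply: (le_trans haa0); rewrite /a0 ge_min lexx.
have h2 : a <= W / (Wq + 1) by apply: (le_trans haa0); rewrite /a0 !ge_min lexx !orbT.
have h3 : a <= T / (Tq + 1) by apply: (le_trans haa0); rewrite /a0 !ge_min lexx !orbT.
have h4 : a <= 1 by apply: (le_trans haa0); rewrite /a0 !ge_min lexx !orbT.
have h1' : a * (M + 1) <= d by rewrite -ler_pdivlMr //; lra.
have h2' : a * (Wq + 1) <= W by rewrite -ler_pdivlMr //; lra.
have h3' : a * (Tq + 1) <= T by rewrite -ler_pdivlMr //; lra.
split; [|nra|nra].
have e : (W - a * Wq) * (T - a * Tq) - (Y - a * Yq)^+2 =
   d - a * (W * Tq + Wq * T - 2 * Y * Yq) + a^+2 * (Wq * Tq - Yq^+2) by rewrite /d; ring.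
have hab : a * (W * Tq + Wq * T - 2 * Y * Yq) <= a * `|W * Tq + Wq * T - 2 * Y * Yq|.
  by apply: ler_wpM2l; [lra | exact: ler_norm].
have hq : 0 <= a^+2 * (Wq * Tq) by apply: mulr_ge0; [exact: sqr_ge0 | exact: mulr_ge0].
have hq2 : a^+2 * Yq^+2 <= a * Yq^+2.
  apply: ler_wpM2r; first exact: sqr_ge0.
  by rewrite expr2; nra.
have : 0 < (W - a * Wq) * (T - a * Tq) - (Y - a * Yq)^+2.
  rewrite e; rewrite /M in h1'.
  nra.
lra.
Qed.

End Perturb.

Section Faces.
Variable R : realType.
Notation V := 'rV[R]_4.
Variable F : set V.
Hypothesis hF : is_face Kc F.

Lemma half1 : 2^-1 * 2 = 1 :> R.
Proof. have h : (2:R) != 0 by rewrite pnatr_eq0. field => //. Qed.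
Lemma half2 : (1 - 2^-1) * 2 = 1 :> R.
Proof. have h : (2:R) != 0 by rewrite pnatr_eq0. field => //. Qed.
Lemma half_gt0 : 0 < 2^-1 :> R. Proof. lra. Qed.
Lemma half_lt1 : 2^-1 < 1 :> R. Proof. lra. Qed.

Lemma F_K v : F v -> Kc v.
Proof. by case: hF => h _; apply: h. Qed.

Lemma F_0 v : F v -> F 0.
Proof.
move=> Fv; case: hF => _ [_ [_ h]].
have K0 : Kc (0 : V) by apply: K1_K; exact: K1_0.
have K2v : Kc (2 *: v) by apply: KZ => //; exact: F_K.
have := h 0 (2 *: v) (2^-1) K0 K2v half_gt0 half_lt1.
rewrite scaler0 add0r scalerA half2 scale1r.
by move=> /(_ Fv) [].
Qed.

Lemma F_conv u w (a : R) : F u -> F w -> 0 <= a -> a <= 1 -> F (a *: u + (1 - a) *: w).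
Proof. by case: hF => _ [_ [hc _]] Fu Fw ha0 ha1; apply: hc. Qed.

Lemma F_half v : F (2 *: v) -> F v.
Proof.
move=> F2v; have := F_conv (a := 2^-1) F2v (F_0 F2v).
rewrite scaler0 addr0 scalerA half1 scale1r.
apply; [exact: ltW half_gt0 | exact: ltW half_lt1].
Qed.

Lemma F_sum u w : Kc u -> Kc w -> F (u + w) -> F u /\ F w.
Proof.
move=> Ku Kw Fuw; case: hF => _ [_ [_ h]].
have K2u : Kc (2 *: u) by apply: KZ.
have K2w : Kc (2 *: w) by apply: KZ.
have := h _ _ (2^-1) K2u K2w half_gt0 half_lt1.
rewrite !scalerA half1 half2 !scale1r => /(_ Fuw) [F2u F2w].
by split; apply: F_half.
Qed.

Lemma F_scale v (a : R) : F v -> 0 <= a -> F (a *: v).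
Proof.
move=> Fv ha.
have Kv := F_K Fv.
have [a1|a1] := leP a 1.
  by have := F_conv (a := a) Fv (F_0 Fv) ha a1; rewrite scaler0 addr0.
case: hF => _ [_ [_ h]].
have K0 : Kc (0 : V) by apply: K1_K; exact: K1_0.
have Kav : Kc (a *: v) by apply: KZ.
have ai0 : 0 < a^-1 by rewrite invr_gt0; lra.
have ai1 : a^-1 < 1 by rewrite invf_lt1; lra.
have := h _ _ (a^-1) Kav K0 ai0 ai1.
rewrite scaler0 addr0 scalerA mulVf ?scale1r; last by lra.
by move=> /(_ Fv) [].
Qed.

Lemma F_add u w : F u -> F w -> F (u + w).
Proof.
move=> Fu Fw; have := F_conv (a := 2^-1) Fu Fw.
rewrite (_ : 1 - 2^-1 = 2^-1 :> R); last by lra.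
rewrite -scalerDr => /(_ (ltW half_gt0) (ltW half_lt1)) H.
by have := F_scale H (a := 2); rewrite scalerA mulrC half1 scale1r; apply.
Qed.

End Faces.

Section K1class.
Variable R : realType.
Notation V := 'rV[R]_4.
Variable F : set V.
Hypothesis hF : is_face Kc F.

Lemma F_from_scaled (q : V) (a : R) : 0 < a -> F (a *: q) -> F q.
Proof.
move=> ha h; have := F_scale hF h (a := a^-1).
by rewrite scalerA mulVf ?scale1r; [apply; rewrite invr_ge0 ltW | lra].
Qed.

Lemma F_of_decomp (p q : V) (a : R) : F p -> 0 < a -> Kc (p - a *: q) -> Kc q -> F q.
Proof.
move=> Fp ha Kp' Kq.
have Kaq : Kc (a *: q) by apply: KZ => //; exact: ltW.
have := F_sum hF Kp' Kaq; rewrite subrK => /(_ Fp) [_ h].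
exact: F_from_scaled h.
Qed.

Lemma K1_int (p : V) : K1 p -> F p -> cX p^+2 + cY p^+2 < cT p^+2 -> forall q, K1 q -> F q.
Proof.
move=> [zp [tp hp]] Fp hlt q Kq.
case: (Kq) => [zq [tq hq]].
set X := cX p; set Y := cY p; set T := cT p.
set Xq := cX q; set Yq := cY q; set Tq := cT q.
have hW : 0 < T - X by rewrite /X /T; nra.
have hT : 0 < T + X by rewrite /X /T; nra.
have hWq : 0 <= Tq - Xq by rewrite /Xq /Tq; nra.
have hTq : 0 <= Tq + Xq by rewrite /Xq /Tq; nra.
have hY : Y^+2 < (T - X) * (T + X) by rewrite /X /Y /T; nra.
have [a0 ha0 /(_ a0 ha0 (lexx _)) [h1 h2 h3]] := rot_perturb Yq hY hW hT hWq hTq.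
apply: (F_of_decomp Fp ha0) => //; last exact: K1_K.
apply: K1_K; rewrite /K1 /= !cE zp zq mulr0 subrr; split => //; split.
  rewrite -/T -/Tq; nra.
rewrite -/X -/Y -/T -/Xq -/Yq -/Tq.
have e : (T - X - a0 * (Tq - Xq)) * (T + X - a0 * (Tq + Xq)) = (T - a0 * Tq)^+2 - (X - a0 * Xq)^+2 by ring.
rewrite e in h1; lra.
Qed.

Lemma K1_class : (forall q, K1 q -> F q) \/
  exists c d : R, c^+2 + d^+2 = 1 /\ forall a, K1 a -> F a -> a = cT a *: mk4 c d 0 1.
Proof.
case: (pselect (exists p, [/\ K1 p, F p & cX p^+2 + cY p^+2 < cT p^+2])) => [[p [Kp Fp hp]]|nint].
  by left; apply: K1_int Kp Fp hp.
right.
have bd : forall a, K1 a -> F a -> cX a^+2 + cY a^+2 = cT a^+2.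
  move=> a Ka Fa; case: (Ka) => _ [_ h]; apply: le_anti; rewrite h /=.
  by rewrite leNgt; apply/negP => hlt; apply: nint; exists a.
case: (pselect (exists p, [/\ K1 p, F p & 0 < cT p])) => [[p [Kp Fp tp]]|nz].
  set T := cT p.
  exists (cX p / T), (cY p / T); split.
    rewrite !expr_div_n -mulrDl bd // divff //; apply: expf_neq0; lra.
  move=> a Ka Fa.
  have Kpa : K1 (p + a) by apply: K1D.
  have Fpa : F (p + a) by apply: F_add.
  have e1 := bd _ Kp Fp; have e2 := bd _ Ka Fa; have e3 := bd _ Kpa Fpa.
  move: e3; rewrite !cE => e3.
  have cs : cX p * cX a + cY p * cY a = T * cT a.
    have e : (cX p + cX a)^+2 + (cY p + cY a)^+2 - (cT p + cT a)^+2 =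
      (cX p^+2 + cY p^+2 - cT p^+2) + (cX a^+2 + cY a^+2 - cT a^+2) +
      2 * (cX p * cX a + cY p * cY a - cT p * cT a) by ring.
    rewrite /T; move: e; rewrite e1 e2 e3; lra.
  have sq0 : (cX a * T - cX p * cT a)^+2 + (cY a * T - cY p * cT a)^+2 = 0.
    have e : (cX a * T - cX p * cT a)^+2 + (cY a * T - cY p * cT a)^+2 =
      (cX a^+2 + cY a^+2) * T^+2 + (cX p^+2 + cY p^+2) * cT a^+2
      - 2 * T * cT a * (cX p * cX a + cY p * cY a) by ring.
    rewrite e e1 e2 cs /T; ring.
  have g1 := sqr_ge0 (cX a * T - cX p * cT a).
  have g2 := sqr_ge0 (cY a * T - cY p * cT a).
  have hx : cX a * T = cX p * cT a.
    have : (cX a * T - cX p * cT a)^+2 = 0 by lra.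
    by move/eqP; rewrite sqrf_eq0 subr_eq0 => /eqP.
  have hy : cY a * T = cY p * cT a.
    have : (cY a * T - cY p * cT a)^+2 = 0 by lra.
    by move/eqP; rewrite sqrf_eq0 subr_eq0 => /eqP.
  have T0 : T != 0 by rewrite gt_eqF.
  case: Ka => za _.
  apply: vecP; rewrite !cE ?za ?mulr0 ?mulr1 //.
  - by apply: (mulIf T0); rewrite hx; field.
  - by apply: (mulIf T0); rewrite hy; field.
exists 1, 0; split; first by rewrite expr1n expr0n addr0.
move=> a Ka Fa.
have ta : cT a = 0.
  case: (Ka) => _ [ta _]; apply: le_anti; rewrite ta andbT leNgt; apply/negP => h.
  by apply: nz; exists a.
have h := bd _ Ka Fa.
case: Ka => za _.
move: h; rewrite ta expr0n /= => h.
apply: vecP; rewrite !cE ?ta ?za !mul0r //; nra.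
Qed.

End K1class.

Section Tangent.
Variable R : realType.
Notation V := 'rV[R]_4.

Definition tanf (s : R) (v : V) := cZ v - 4 * s^+3 * cY v + 3 * s^+4 * cT v.

Lemma tanfD s u w : tanf s (u + w) = tanf s u + tanf s w.
Proof. rewrite /tanf !cE; ring. Qed.

Lemma K2_T0 (v : V) : K2 v -> cT v = 0 -> cY v = 0.
Proof.
move=> [_ [_ [_ h]]] t0; apply: quart_le0; move: h; rewrite t0 expr0n /= mulr0 //.
Qed.

Lemma tan_poly (Y T s : R) : Y^+4 - 4 * s^+3 * Y * T^+3 + 3 * s^+4 * T^+4 =
   (Y - s * T)^+2 * ((Y + s * T)^+2 + 2 * (s * T)^+2).
Proof. ring. Qed.

Lemma tan_ge0 s v : K2 v -> 0 <= tanf s v.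
Proof.
move=> Kv; case: (Kv) => [xv [tv [zv hv]]].
have [t0|tp] := eqVneq (cT v) 0.
  by rewrite /tanf (K2_T0 Kv t0) t0 !mulr0 subr0 addr0.
have tp' : 0 < cT v by rewrite lt_neqAle eq_sym tp tv.
have h3 : 0 < cT v ^+ 3 by apply: exprn_gt0.
rewrite -(pmulr_rge0 _ h3).
have e : cT v ^+ 3 * tanf s v = (cZ v * cT v ^+ 3 - cY v ^+ 4) +
   (cY v^+4 - 4 * s^+3 * cY v * cT v^+3 + 3 * s^+4 * cT v^+4) by rewrite /tanf; ring.
rewrite e tan_poly; apply: addr_ge0; first lra.
apply: mulr_ge0; first exact: sqr_ge0.
by apply: addr_ge0; [exact: sqr_ge0 | apply: mulr_ge0 => //; exact: sqr_ge0].
Qed.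

Lemma tan_eq0 s v : K2 v -> tanf s v = 0 -> v = cT v *: mk4 1 s (s^+4) 1.
Proof.
move=> Kv h0; case: (Kv) => [xv [tv [zv hv]]].
have [t0|tp] := eqVneq (cT v) 0.
  have y0 := K2_T0 Kv t0.
  move: h0; rewrite /tanf y0 t0 !mulr0 subr0 addr0 => z0.
  by apply: vecP; rewrite !cE ?xv ?t0 ?y0 ?z0 !mul0r.
have tp' : 0 < cT v by rewrite lt_neqAle eq_sym tp tv.
have h3 : 0 < cT v ^+ 3 by apply: exprn_gt0.
have e : cT v ^+ 3 * tanf s v = (cZ v * cT v ^+ 3 - cY v ^+ 4) +
   (cY v^+4 - 4 * s^+3 * cY v * cT v^+3 + 3 * s^+4 * cT v^+4) by rewrite /tanf; ring.
rewrite h0 mulr0 tan_poly in e.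
set P := (cY v - s * cT v)^+2 * ((cY v + s * cT v)^+2 + 2 * (s * cT v)^+2) in e.
have hP : 0 <= P.
  apply: mulr_ge0; first exact: sqr_ge0.
  by apply: addr_ge0; [exact: sqr_ge0 | apply: mulr_ge0 => //; exact: sqr_ge0].
have P0 : P = 0 by lra.
have Z0 : cZ v * cT v ^+ 3 = cY v ^+ 4 by lra.
have ys : cY v = s * cT v.
  move/eqP: P0; rewrite /P mulf_eq0 => /orP[]; first by rewrite sqrf_eq0 subr_eq0 => /eqP.
  move=> /eqP hq.
  have g1 := sqr_ge0 (cY v + s * cT v); have g2 := sqr_ge0 (s * cT v).
  have hst : (s * cT v)^+2 = 0 by lra.
  move/eqP: hst; rewrite sqrf_eq0 => /eqP hst.
  have : (cY v + s * cT v)^+2 = 0 by lra.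
  by move/eqP; rewrite sqrf_eq0 hst addr0 => /eqP ->.
have zs : cZ v = s^+4 * cT v.
  apply: (mulIf (expf_neq0 3 tp)); rewrite Z0 ys; ring.
apply: vecP; rewrite !cE ?xv ?ys ?zs; ring.
Qed.

Lemma on_curve (v : V) : K2 v -> 0 < cT v -> cY v ^+ 4 = cZ v * cT v ^+ 3 ->
  tanf (cY v / cT v) v = 0.
Proof.
move=> Kv tp h; rewrite /tanf.
have t0 : cT v != 0 by rewrite gt_eqF.
have h3 : cT v ^+ 3 != 0 by rewrite expf_neq0.
have -> : cZ v = cY v ^+ 4 / cT v ^+ 3 by rewrite h mulfK.
field; exact: t0.
Qed.

End Tangent.

Section K2class.
Variable R : realType.
Notation V := 'rV[R]_4.
Variable F : set V.
Hypothesis hF : is_face Kc F.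

Lemma sq_lt (a b : R) : 0 <= b -> a^+2 < b^+2 -> a < b.
Proof. move=> hb h; rewrite ltNge; apply/negP => hab. nra. Qed.

Lemma sq_mono (a b : R) : 0 <= a -> a <= b -> a^+2 <= b^+2.
Proof. move=> ha hab; nra. Qed.

Lemma K2_int (p : V) : K2 p -> F p -> 0 < cT p -> cY p^+4 < cZ p * cT p^+3 -> forall q, K2 q -> F q.
Proof.
move=> [xp [tp [zp hp]]] Fp tp' hlt q Kq.
case: (Kq) => [xq [tq [zq hq]]].
set Y := cY p; set Z := cZ p; set T := cT p.
have T3 : 0 < T^+3 by apply: exprn_gt0.
have Zp : 0 < Z.
  have : 0 < Z * T^+3 by apply: le_lt_trans hlt; exact: exprn_even_ge0.
  by rewrite pmulr_lgt0.
pose r := Num.sqrt (Z * T).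
have ZT : 0 < Z * T by apply: mulr_gt0.
have r0 : 0 < r by rewrite sqrtr_gt0.
have r2 : r^+2 = Z * T by rewrite sqr_sqrtr // ltW.
pose u := Y^+2 / T.
have u0 : 0 <= u by apply: divr_ge0; [exact: sqr_ge0 | exact: ltW].
have uT : u * T = Y^+2 by rewrite /u divfK // gt_eqF.
have ur : u < r.
  have : u^+2 < r^+2.
    rewrite r2; have e : u^+2 * T^+2 = Y^+4 by rewrite -exprMn uT -exprM.
    have T2 : 0 < T^+2 by apply: exprn_gt0.
    rewrite -(ltr_pM2r T2) e; have -> : Z * T * T^+2 = Z * T^+3 by rewrite /T; ring.
    exact: hlt.
  by apply: sq_lt; exact: ltW.
pose W := (u + r) / 2.
have hW : 0 < W by rewrite /W; lra.
have h1 : Y^+2 < W * T by rewrite -uT ltr_pM2r // /W; lra.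
have h2 : W^+2 < Z * T.
  have hWr : W < r by rewrite /W; lra.
  rewrite -r2; nra.
have [a1 ha1 H1] := rot_perturb (cY q) h1 hW tp' (lexx 0) tq.
have [a2 ha2 H2] := rot_perturb 0 h2 Zp tp' zq tq.
pose a := Num.min a1 a2.
have ha : 0 < a by rewrite lt_min ha1 ha2.
have m1 : a <= a1 by rewrite ge_min lexx.
have m2 : a <= a2 by rewrite ge_min lexx orbT.
have [g1 g2 g3] := H1 a ha m1.
have [g4 g5 g6] := H2 a ha m2.
rewrite !mulr0 !subr0 in g1 g2 g4.
apply: (F_of_decomp hF Fp ha); last exact: K2_K.
apply: K2_K; rewrite /K2 /= !cE xp xq -/Y -/Z -/T; split => //; split; first lra.
split; first lra.
have e4 : (Y - a * cY q)^+4 = ((Y - a * cY q)^+2)^+2 by rewrite -exprM.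
rewrite e4.
have s1 : ((Y - a * cY q)^+2)^+2 <= (W * (T - a * cT q))^+2.
  by apply: sq_mono; [exact: sqr_ge0 | lra].
apply: (le_trans s1); rewrite exprMn.
have -> : (Z - a * cZ q) * (T - a * cT q) ^+ 3 = ((Z - a * cZ q) * (T - a * cT q)) * (T - a * cT q) ^+ 2 by ring.
apply: ler_wpM2r; [exact: sqr_ge0 | lra].
Qed.


Definition W2 (w : V) := (exists s, w = mk4 1 s (s^+4) 1) \/ w = mk4 0 0 1 0.

Lemma K2_class : (forall q, K2 q -> F q) \/
  exists w, W2 w /\ forall b, K2 b -> F b -> exists2 l, 0 <= l & b = l *: w.
Proof.
case: (pselect (exists p, [/\ K2 p, F p, 0 < cT p & cY p^+4 < cZ p * cT p^+3])) =>
   [[p [Kp Fp tp hp]]|nint].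
  by left; apply: K2_int Kp Fp tp hp.
right.
have bd : forall b, K2 b -> F b -> 0 < cT b -> cY b^+4 = cZ b * cT b^+3.
  move=> b Kb Fb tb; case: (Kb) => _ [_ [_ h]]; apply: le_anti; rewrite h /=.
  by rewrite leNgt; apply/negP => hlt; apply: nint; exists b.
case: (pselect (exists p, [/\ K2 p, F p & 0 < cT p])) => [[p [Kp Fp tp]]|nz].
  pose s := cY p / cT p.
  have p0 : tanf s p = 0 by apply: on_curve => //; exact: bd.
  exists (mk4 1 s (s^+4) 1); split; first by left; exists s.
  move=> b Kb Fb; exists (cT b); first by case: Kb => _ [].
  have Kpb : K2 (p + b) by apply: K2D.
  have Fpb : F (p + b) by apply: F_add.
  have tpb : 0 < cT (p + b) by rewrite cTD; case: Kb => _ [tb _]; lra.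
  have e := on_curve Kpb tpb (bd _ Kpb Fpb tpb).
  set s' := cY (p + b) / cT (p + b) in e.
  have g1 := tan_ge0 s' Kp; have g2 := tan_ge0 s' Kb.
  rewrite tanfD in e.
  have ep : tanf s' p = 0 by lra.
  have eb : tanf s' b = 0 by lra.
  have hp := tan_eq0 Kp ep.
  have ss : s' = s.
    have : cY p = cT p * s' by rewrite {1}hp !cE.
    by move=> hh; rewrite /s hh mulrAC divff ?mul1r // gt_eqF.
  by rewrite -ss; apply: tan_eq0.
exists (mk4 0 0 1 0); split; first by right.
move=> b Kb Fb; exists (cZ b); first by case: Kb => _ [_ []].
have tb : cT b = 0.
  case: (Kb) => _ [tb _]; apply: le_anti; rewrite tb andbT leNgt; apply/negP => h.
  by apply: nz; exists b.
have yb := K2_T0 Kb tb.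
case: Kb => xb _.
apply: vecP; rewrite !cE ?xb ?tb ?yb; ring.
Qed.

End K2class.

Section Functionals.
Variable R : realType.
Notation V := 'rV[R]_4.

Lemma dotDl (k1 k2 v : V) : dotv (k1 + k2) v = dotv k1 v + dotv k2 v.
Proof. rewrite !dotE !cE; ring. Qed.
Lemma dotDr (k v1 v2 : V) : dotv k (v1 + v2) = dotv k v1 + dotv k v2.
Proof. rewrite !dotE !cE; ring. Qed.
Lemma dotZl (a : R) (k v : V) : dotv (a *: k) v = a * dotv k v.
Proof. rewrite !dotE !cE; ring. Qed.
Lemma dotZr (a : R) (k v : V) : dotv k (a *: v) = a * dotv k v.
Proof. rewrite !dotE !cE; ring. Qed.
Lemma dotBl (k1 k2 v : V) : dotv (k1 - k2) v = dotv k1 v - dotv k2 v.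
Proof. rewrite !dotE !cE; ring. Qed.

Lemma dualD (k1 k2 : V) : dual_cone Kc k1 -> dual_cone Kc k2 -> dual_cone Kc (k1 + k2).
Proof. by move=> h1 h2 v Kv; rewrite dotDl; apply: addr_ge0; [apply: h1|apply: h2]. Qed.
Lemma dualZ (a : R) (k : V) : 0 <= a -> dual_cone Kc k -> dual_cone Kc (a *: k).
Proof. by move=> ha h v Kv; rewrite dotZl; apply: mulr_ge0 => //; apply: h. Qed.

Lemma K1_nonneg (k : V) : 0 <= cT k -> cX k ^+ 2 + cY k ^+ 2 <= cT k ^+ 2 ->
  forall a, K1 a -> 0 <= dotv k a.
Proof.
move=> hk hk2 a [za [ta ha]]; rewrite dotE za mulr0 addr0.
set p := cX k * cX a + cY k * cY a.
have e : p ^+ 2 + (cX k * cY a - cY k * cX a) ^+ 2 = (cX k ^+ 2 + cY k ^+ 2) * (cX a ^+ 2 + cY a ^+ 2) by rewrite /p; ring.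
have h1 : p ^+ 2 <= (cT k * cT a) ^+ 2.
  rewrite exprMn; have := sqr_ge0 (cX k * cY a - cY k * cX a).
  have := ler_pM (addr_ge0 (sqr_ge0 (cX k)) (sqr_ge0 (cY k))) (addr_ge0 (sqr_ge0 (cX a)) (sqr_ge0 (cY a))) hk2 ha.
  lra.
have h2 : - p <= cT k * cT a.
  apply: sq_le; first exact: mulr_ge0.
  by rewrite sqrrN.
lra.
Qed.

Lemma amgm4 (b d Y Z T : R) : 0 < b -> 0 <= T -> 0 <= Z -> Y ^+ 4 <= Z * T ^+ 3 ->
  0 <= b * T + d * Y + d ^+ 4 / (8 * b ^+ 3) * Z.
Proof.
move=> hb hT hZ hY.
have hb3 : 0 < 8 * b ^+ 3 by apply: mulr_gt0 => //; exact: exprn_gt0.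
set l := d ^+ 4 / (8 * b ^+ 3).
have hl : 0 <= l by apply: divr_ge0 => //; [exact: exprn_even_ge0 | exact: ltW].
have el : l * (8 * b ^+ 3) = d ^+ 4 by rewrite /l divfK // gt_eqF.
have [T0|Tp] := eqVneq T 0.
  have : Y ^+ 4 <= 0 by move: hY; rewrite T0 expr0n /= mulr0.
  move=> /quart_le0 ->; rewrite T0 !mulr0 !add0r; exact: mulr_ge0.
have Tp' : 0 < T by rewrite lt_neqAle eq_sym Tp hT.
have T3 : 0 < T ^+ 3 by apply: exprn_gt0.
have key : 0 <= 8 * b ^+ 3 * (T ^+ 3 * (b * T + d * Y + l * Z)).
  have h1 : l * Y ^+ 4 <= l * (Z * T ^+ 3) by apply: ler_wpM2l.
  set m := d * Y.
  have e : 8 * b ^+ 4 * T ^+ 4 + 8 * b ^+ 3 * m * T ^+ 3 + m ^+ 4 =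
      (m ^+ 2 - 2 * b ^+ 2 * T ^+ 2) ^+ 2 + 4 * b ^+ 2 * T ^+ 2 * (m + b * T) ^+ 2 by ring.
  have hsos : 0 <= 8 * b ^+ 4 * T ^+ 4 + 8 * b ^+ 3 * m * T ^+ 3 + m ^+ 4.
    rewrite e; apply: addr_ge0; first exact: sqr_ge0.
    apply: mulr_ge0; last exact: sqr_ge0.
    apply: mulr_ge0; last exact: sqr_ge0.
    apply: mulr_ge0 => //; exact: sqr_ge0.
  have em : m ^+ 4 = (8 * b ^+ 3) * (l * Y ^+ 4) by rewrite /m exprMn mulrA (mulrC _ l) el.
  have ex : 8 * b ^+ 3 * (T ^+ 3 * (b * T + d * Y + l * Z)) =
      8 * b ^+ 4 * T ^+ 4 + 8 * b ^+ 3 * m * T ^+ 3 + (8 * b ^+ 3) * (l * (Z * T ^+ 3)) by rewrite /m; ring.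
  rewrite ex; apply: (le_trans hsos); rewrite em lerD2l.
  by apply: ler_wpM2l => //; exact: ltW.
move: key; rewrite pmulr_rge0 // pmulr_rge0 //.
Qed.

End Functionals.

Section KGKH.
Variable R : realType.
Notation V := 'rV[R]_4.

Lemma K2_dot (k b : V) : K2 b -> dotv k b = (cX k + cT k) * cT b + cY k * cY b + cZ k * cZ b.
Proof. by move=> [xb _]; rewrite dotE xb; ring. Qed.

Lemma K1_dual_char (y : V) : (forall a, K1 a -> 0 <= dotv y a) ->
  0 <= cT y /\ cX y ^+ 2 + cY y ^+ 2 <= cT y ^+ 2.
Proof.
move=> h.
have ht : 0 <= cT y.
  have := h (mk4 0 0 0 1); rewrite dotE !cE !mulr0 mulr1 !add0r; apply.
  by rewrite /K1 /= !cE expr0n /= expr1n add0r; split => //; split => //; lra.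
split => //.
set r := Num.sqrt (cX y ^+ 2 + cY y ^+ 2).
have hr : 0 <= r by apply: sqrtr_ge0.
have r2 : r ^+ 2 = cX y ^+ 2 + cY y ^+ 2 by rewrite sqr_sqrtr // addr_ge0 ?sqr_ge0.
have := h (mk4 (- cX y) (- cY y) 0 r).
rewrite dotE !cE mulr0 addr0.
have -> : cX y * - cX y + cY y * - cY y + cT y * r = r * (cT y - r).
  have -> : cX y * - cX y + cY y * - cY y = - (cX y ^+ 2 + cY y ^+ 2) by ring.
  rewrite -r2; ring.
move=> /(_ _) H.
have : 0 <= r * (cT y - r) by apply: H; rewrite /K1 /= !cE; split => //; split => //; rewrite !sqrrN r2.
have [r0|rp] := eqVneq r 0.
  move=> _; rewrite -r2 r0 expr0n /=; exact: sqr_ge0.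
have rp' : 0 < r by rewrite lt_neqAle eq_sym rp hr.
rewrite pmulr_rge0 // subr_ge0 => hh.
by rewrite -r2; apply: sq_mono.
Qed.

Lemma KG (y : V) : (forall a, K1 a -> 0 <= dotv y a) ->
  exists l, dual_cone Kc (mk4 (cX y) (cY y) l (cT y)).
Proof.
move=> h; have [ht hxy] := K1_dual_char h.
set b := cX y + cT y.
have hb : 0 <= b.
  have K : K1 (mk4 1 0 0 1 : V) by rewrite /K1 /= !cE expr1n expr0n /= addr0; split => //; split => //; lra.
  have := h _ K; rewrite dotE !cE /b; lra.
exists (cY y ^+ 4 / (8 * b ^+ 3)).
apply: dual_K.
  by apply: K1_nonneg; rewrite !cE.
move=> v Kv; rewrite K2_dot // !cE -/b.
have [b0|bp] := eqVneq b 0.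
  have y2 : cY y = 0.
    have : cY y ^+ 2 <= 0 by move: b0; rewrite /b => b0; nra.
    by move=> h2; apply/eqP; rewrite -sqrf_eq0; apply/eqP; apply: le_anti; rewrite h2 sqr_ge0.
  by rewrite b0 y2 expr0n /= !mul0r !add0r.
have bp' : 0 < b by rewrite lt_neqAle eq_sym bp hb.
case: Kv => _ [tv [zv hv]].
exact: amgm4.
Qed.


Lemma y2zero (y2 y3 : R) : (forall s, 0 <= y2 * s + y3 * s ^+ 4) -> y2 = 0.
Proof.
move=> h; case: (eqVneq y2 0) => // hy.
have hy2 : 0 < y2 ^+ 2 by rewrite exprn_even_gt0.
set A := `|y3| * y2 ^+ 2.
have hA : 0 <= A by apply: mulr_ge0 => //; exact: sqr_ge0.
set e := (1 + A)^-1.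
have he : 0 < e by rewrite invr_gt0; lra.
have eA : e * (1 + A) = 1 by rewrite mulVf //; lra.
have he1 : e <= 1 by nra.
have t2 : A * e = 1 - e by lra.
have t1 : y3 * (y2 ^+ 4 * e ^+ 4) <= `|y3| * (y2 ^+ 4 * e ^+ 4).
  apply: ler_wpM2r; last exact: ler_norm.
  by apply: mulr_ge0; [exact: exprn_even_ge0 | apply: exprn_ge0; exact: ltW].
have t3 : (1 - e) * e ^+ 2 < 1.
  have : e ^+ 2 <= 1 by rewrite expr2; nra.
  nra.
have hv := h (- y2 * e).
have ev : y2 * (- y2 * e) + y3 * (- y2 * e) ^+ 4 = - (y2 ^+ 2 * e) + y3 * (y2 ^+ 4 * e ^+ 4) by ring.
have eA' : `|y3| * (y2 ^+ 4 * e ^+ 4) = (y2 ^+ 2 * e) * ((A * e) * e ^+ 2) by rewrite /A; ring.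
rewrite ev in hv; rewrite eA' t2 in t1.
have p : 0 < y2 ^+ 2 * e by apply: mulr_gt0.
have : (y2 ^+ 2 * e) * ((1 - e) * e ^+ 2) < (y2 ^+ 2 * e) * 1 by rewrite ltr_pM2l.
lra.
Qed.

Lemma KH (y : V) : (forall b, K2 b -> 0 <= dotv y b) ->
  exists mu, dual_cone Kc (y + mu *: mk4 (-1) 0 0 1).
Proof.
move=> h.
set b := cX y + cT y.
have g : forall s, 0 <= b + cY y * s + cZ y * s ^+ 4.
  move=> s; have K : K2 (mk4 1 s (s ^+ 4) 1 : V).
    by rewrite /K2 /= !cE expr1n mulr1; split => //; split => //; split => //; exact: exprn_even_ge0.
  by have := h _ K; rewrite dotE !cE /b; lra.
have hb : 0 <= b by have := g 0; rewrite expr0n /= !mulr0 !addr0.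
exists ((cX y ^+ 2 + cY y ^+ 2) / (2 * b) + `|cT y|).
set mu := (cX y ^+ 2 + cY y ^+ 2) / (2 * b) + `|cT y|.
have hmu : `|cT y| <= mu.
  rewrite /mu lerDr; apply: divr_ge0; [by apply: addr_ge0; exact: sqr_ge0 | lra].
apply: dual_K.
  apply: K1_nonneg; rewrite !cE.
    have := ler_norm (- cT y); rewrite normrN; lra.
  have [b0|bp] := eqVneq b 0.
    have y2 : cY y = 0 by apply: (@y2zero _ (cZ y)) => s; have := g s; rewrite b0 add0r.
    have y1 : cX y = - cT y by move: b0; rewrite /b; lra.
    rewrite y2 y1.
    have -> : (- cT y + mu * -1) = - (cT y + mu * 1) by ring.
    by rewrite sqrrN mulr0 addr0 expr0n /= addr0.
  have bp' : 0 < b by rewrite lt_neqAle eq_sym bp hb.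
  have emu : mu * (2 * b) = cX y ^+ 2 + cY y ^+ 2 + 2 * b * `|cT y|.
    rewrite /mu mulrDl divfK; [ring | by rewrite mulf_neq0 // gt_eqF].
  have hn : 0 <= 2 * b * `|cT y| by apply: mulr_ge0 => //; lra.
  rewrite mulr0 addr0 mulr1.
  have e : (cT y + mu) ^+ 2 - ((cX y + mu * -1) ^+ 2 + cY y ^+ 2) =
     cT y ^+ 2 - cX y ^+ 2 - cY y ^+ 2 + mu * (2 * b) by rewrite /b; ring.
  have : 0 <= (cT y + mu) ^+ 2 - ((cX y + mu * -1) ^+ 2 + cY y ^+ 2).
    by rewrite e emu; have := sqr_ge0 (cT y); lra.
  lra.
move=> v Kv; rewrite dotDl dotZl (K2_dot (mk4 (-1) 0 0 1) Kv) !cE.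
have -> : (-1 + 1) * cT v + 0 * cY v + 0 * cZ v = 0 by ring.
by rewrite mulr0 addr0; apply: h.
Qed.

End KGKH.

Section Expose.
Variable R : realType.
Notation V := 'rV[R]_4.

Lemma circ_le1 (c d : R) : c ^+ 2 + d ^+ 2 = 1 -> c <= 1.
Proof. move=> h; have := sqr_ge0 d; nra. Qed.
Lemma circ_d0 (c d : R) : c ^+ 2 + d ^+ 2 = 1 -> c = 1 -> d = 0.
Proof. move=> h c1; move: h; rewrite c1 expr1n => h; apply/eqP; rewrite -sqrf_eq0; apply/eqP; lra. Qed.

Lemma dual_mk (k : V) : 0 <= cT k -> cX k ^+ 2 + cY k ^+ 2 <= cT k ^+ 2 ->
  (forall v, K2 v -> 0 <= (cX k + cT k) * cT v + cY k * cY v + cZ k * cZ v) -> dual_cone Kc k.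
Proof.
move=> h1 h2 h3; apply: dual_K; first exact: K1_nonneg.
by move=> v Kv; rewrite K2_dot //; apply: h3.
Qed.

Lemma EU (c d : R) (w : V) : c ^+ 2 + d ^+ 2 = 1 -> W2 w -> w <> mk4 c d 0 1 ->
  exists k, [/\ dual_cone Kc k, dotv k (mk4 c d 0 1) = 0 & 0 < dotv k w].
Proof.
move=> hcd hw hne.
have [c1|c1] := eqVneq c 1.
  have d0 := circ_d0 hcd c1.
  exists (mk4 (-1) 0 1 1); split.
  - apply: dual_mk; rewrite !cE ?expr0n ?expr1n /=; [lra|lra|].
    by move=> v [_ [_ [zv _]]]; rewrite addNr mul0r mul0r !add0r mul1r.
  - by rewrite dotE !cE c1; ring.
  case: hw => [[s ws]|wz]; last by rewrite wz dotE !cE; lra.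
  have s0 : s != 0 by apply/eqP => s0; apply: hne; rewrite ws s0 c1 d0 expr0n.
  rewrite ws dotE !cE.
  have : 0 < s ^+ 4 by rewrite exprn_even_gt0.
  lra.
have cl : c < 1 by rewrite lt_neqAle c1 (circ_le1 hcd).
set b := 1 - c.
have hb : 0 < b by rewrite /b; lra.
set l0 := (- d) ^+ 4 / (8 * b ^+ 3).
have hl0 : 0 <= l0 by apply: divr_ge0; [exact: exprn_even_ge0 | apply: mulr_ge0 => //; apply: exprn_ge0; lra].
exists (mk4 (- c) (- d) (l0 + 1) 1); split.
- apply: dual_mk; rewrite !cE ?sqrrN ?expr1n; [lra|lra|].
  move=> v [_ [tv [zv hv]]].
  have := amgm4 (- d) hb tv zv hv.
  rewrite /b /l0 => H; nra.
- rewrite dotE !cE; have := hcd; rewrite !expr2; lra.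
case: hw => [[s ws]|wz]; last by rewrite wz dotE !cE; lra.
rewrite ws dotE !cE.
have H : 0 <= b * 1 + - d * s + l0 * s ^+ 4.
  apply: amgm4 => //; [exact: exprn_even_ge0 | by rewrite expr1n mulr1].
have [s0|s0] := eqVneq s 0.
  by move: H; rewrite s0 expr0n /= !mulr0 /b; lra.
have : 0 < s ^+ 4 by rewrite exprn_even_gt0.
rewrite /b in H; lra.
Qed.


Lemma EW (c d : R) (w : V) : c ^+ 2 + d ^+ 2 = 1 -> W2 w -> w <> mk4 c d 0 1 ->
  exists k, [/\ dual_cone Kc k, dotv k w = 0 & 0 < dotv k (mk4 c d 0 1)].
Proof.
move=> hcd hw hne.
have hc := circ_le1 hcd.
case: hw => [[s ws]|wz].
  set mu := 3 * s ^+ 2 + 1.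
  have hmu : 1 <= mu by rewrite /mu; have := sqr_ge0 s; lra.
  have s4 : 0 <= s ^+ 4 by exact: exprn_even_ge0.
  have s6 : 0 <= s ^+ 6 by exact: exprn_even_ge0.
  have key : mu ^+ 2 + 16 * s ^+ 6 + (9 * s ^+ 8 + 2 * s ^+ 6 + 6 * s ^+ 4) = (3 * s ^+ 4 + mu) ^+ 2.
    by rewrite /mu; ring.
  have s8 : 0 <= s ^+ 8 by exact: exprn_even_ge0.
  exists (mk4 (- mu) (- 4 * s ^+ 3) 1 (3 * s ^+ 4 + mu)); split.
  - apply: dual_mk; rewrite !cE.
    + lra.
    + rewrite sqrrN (_ : (- 4 * s ^+ 3) ^+ 2 = 16 * s ^+ 6); last by ring.
      lra.
    + move=> v Kv; have := tan_ge0 s Kv; rewrite /tanf.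
      have -> : (- mu + (3 * s ^+ 4 + mu)) * cT v + - 4 * s ^+ 3 * cY v + 1 * cZ v =
                cZ v - 4 * s ^+ 3 * cY v + 3 * s ^+ 4 * cT v by ring.
      by [].
  - by rewrite ws dotE !cE; ring.
  rewrite dotE !cE mulr0 addr0 mulr1.
  have [s0|s0] := eqVneq s 0.
    have c1 : c != 1.
      apply/eqP => c1; apply: hne; rewrite ws s0 c1 (circ_d0 hcd c1) expr0n //.
    have cl : c < 1 by rewrite lt_neqAle c1 hc.
    move: hmu; rewrite /mu s0 expr0n /= !mulr0 !add0r; lra.
  have s4p : 0 < s ^+ 4 by rewrite exprn_even_gt0.
  set p := mu * c + 4 * s ^+ 3 * d.
  have hp : p ^+ 2 <= mu ^+ 2 + 16 * s ^+ 6.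
    have e : p ^+ 2 + (mu * d - 4 * s ^+ 3 * c) ^+ 2 = (mu ^+ 2 + 16 * s ^+ 6) * (c ^+ 2 + d ^+ 2) by rewrite /p; ring.
    rewrite hcd mulr1 in e; have := sqr_ge0 (mu * d - 4 * s ^+ 3 * c); lra.
  have hp2 : p ^+ 2 < (3 * s ^+ 4 + mu) ^+ 2 by lra.
  have hp3 : p < 3 * s ^+ 4 + mu by apply: sq_lt => //; lra.
  rewrite /p in hp3; lra.
have [c1|c1] := eqVneq c 1.
  exists (mk4 0 0 0 1); split.
  - apply: dual_mk; rewrite !cE ?expr0n ?expr1n /=; [lra|lra|].
    by move=> v [_ [tv _]]; rewrite add0r mul1r !mul0r !addr0.
  - by rewrite wz dotE !cE; ring.
  by rewrite dotE !cE; lra.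
have cl : c < 1 by rewrite lt_neqAle c1 hc.
exists (mk4 (-1) 0 0 1); split.
- apply: dual_mk; rewrite !cE ?expr0n ?expr1n /=; [lra|lra|].
  by move=> v _; rewrite addNr !mul0r !addr0.
- by rewrite wz dotE !cE; ring.
by rewrite dotE !cE; lra.
Qed.

Lemma pair_fun (c d : R) (w : V) (al be : R) : c ^+ 2 + d ^+ 2 = 1 -> W2 w ->
  0 <= al -> 0 <= be -> (w = mk4 c d 0 1 -> al = be) ->
  exists k, [/\ dual_cone Kc k, dotv k (mk4 c d 0 1) = al & dotv k w = be].
Proof.
move=> hcd hw hal hbe heq.
case: (pselect (w = mk4 c d 0 1)) => [e|ne].
  have de : dual_cone Kc (mk4 0 0 1 1 : V).
    apply: dual_mk; rewrite !cE ?expr0n ?expr1n /=; [lra|lra|].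
    move=> v [_ [tv [zv _]]]; lra.
  exists (al *: mk4 0 0 1 1); split.
  - exact: dualZ.
  - by rewrite dotZl dotE !cE; ring.
  by rewrite e dotZl dotE !cE (heq e); ring.
have [ku [du u0 wp]] := EU hcd hw ne.
have [kw [dw w0 up]] := EW hcd hw ne.
exists ((al / dotv kw (mk4 c d 0 1)) *: kw + (be / dotv ku w) *: ku); split.
- apply: dualD; apply: dualZ => //; apply: divr_ge0 => //; exact: ltW.
- by rewrite dotDl !dotZl u0 mulr0 addr0 divfK // gt_eqF.
by rewrite dotDl !dotZl w0 mulr0 add0r divfK // gt_eqF.
Qed.

End Expose.

Section Nice.
Variable R : realType.
Notation V := 'rV[R]_4.

Lemma b0_K1 : K1 (mk4 1 0 0 1 : V).
Proof. by rewrite /K1 /= !cE expr1n expr0n /= addr0; split => //; split => //; lra. Qed.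
Lemma b0_K2 : K2 (mk4 1 0 0 1 : V).
Proof. by rewrite /K2 /= !cE expr1n expr0n /= mulr1; split => //; split => //; split => //; lra. Qed.

Section Face.
Variable F : set V.
Hypothesis hF : is_face Kc F.
Variable y : V.
Hypothesis hy : dual_cone F y.

Lemma decompF f : F f -> exists a b, [/\ K1 a, K2 b, F a, F b & f = a + b].
Proof.
move=> Ff; have [a Ka [b Kb e]] := F_K hF Ff.
rewrite -e in Ff; have [Fa Fb] := F_sum hF (K1_K Ka) (K2_K Kb) Ff.
by exists a, b; split.
Qed.

Lemma caseA : (forall q, K1 q -> F q) -> (forall q, K2 q -> F q) ->
  exists k, dual_cone Kc k /\ forall f, F f -> dotv k f = dotv y f.
Proof.
move=> h1 h2; exists y; split => //.
apply: dual_K => v Kv; apply: hy; [exact: h1 | exact: h2].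
Qed.

Lemma caseB (w : V) : (forall q, K1 q -> F q) ->
  (forall b, K2 b -> F b -> exists2 l, 0 <= l & b = l *: w) ->
  exists k, dual_cone Kc k /\ forall f, F f -> dotv k f = dotv y f.
Proof.
move=> h1 h2.
have [l hl e0] := h2 _ b0_K2 (h1 _ b0_K1).
have zw : cZ w = 0.
  have := congr1 (@cT R) e0; have := congr1 (@cZ R) e0.
  rewrite !cE => z1 t1.
  have l0 : l != 0 by apply/eqP => l0; move: t1; rewrite l0 mul0r; lra.
  by apply/eqP; move/eqP: z1; rewrite eq_sym mulf_eq0 (negbTE l0).
have [lam hk] := KG (fun a Ka => hy (h1 a Ka)).
exists (mk4 (cX y) (cY y) lam (cT y)); split => // f Ff.
have [a [b [Ka Kb Fa Fb ->]]] := decompF Ff.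
have [l' _ eb] := h2 _ Kb Fb.
have zb : cZ b = 0 by rewrite eb cE zw mulr0.
case: Ka => za _.
rewrite !dotE !cE za zb; ring.
Qed.

Lemma caseC (c d : R) : c ^+ 2 + d ^+ 2 = 1 ->
  (forall a, K1 a -> F a -> a = cT a *: mk4 c d 0 1) -> (forall q, K2 q -> F q) ->
  exists k, dual_cone Kc k /\ forall f, F f -> dotv k f = dotv y f.
Proof.
move=> hcd h1 h2.
have e0 := h1 _ b0_K1 (h2 _ b0_K2).
have c1 : c = 1.
  have := congr1 (@cX R) e0; rewrite !cE mul1r => ->.
  by [].
have [mu hk] := KH (fun b Kb => hy (h2 b Kb)).
exists (y + mu *: mk4 (-1) 0 0 1); split => // f Ff.
have [a [b [Ka Kb Fa Fb ->]]] := decompF Ff.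
have ea := h1 _ Ka Fa.
have xa : cX a = cT a by have := congr1 (@cX R) ea; rewrite !cE c1 mulr1.
case: Kb => xb _.
rewrite dotDl dotZl !dotE !cE xa xb; ring.
Qed.

Lemma caseD (c d : R) (w : V) : c ^+ 2 + d ^+ 2 = 1 -> W2 w ->
  (forall a, K1 a -> F a -> a = cT a *: mk4 c d 0 1) ->
  (forall b, K2 b -> F b -> exists2 l, 0 <= l & b = l *: w) ->
  exists k, dual_cone Kc k /\ forall f, F f -> dotv k f = dotv y f.
Proof.
move=> hcd hw h1 h2.
set u := mk4 c d 0 1.
have sub : forall al be, 0 <= al -> 0 <= be -> (w = u -> al = be) ->
    (F u -> al = dotv y u) -> (F w -> be = dotv y w) ->
    exists k, dual_cone Kc k /\ forall f, F f -> dotv k f = dotv y f.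
  move=> al be hal hbe heq hu hw'.
  have [k [dk ku kw]] := pair_fun hcd hw hal hbe heq.
  exists k; split => // f Ff.
  have [a [b [Ka Kb Fa Fb ->]]] := decompF Ff.
  rewrite !dotDr; congr (_ + _).
    have ea := h1 _ Ka Fa.
    case: (Ka) => _ [ta _].
    have [t0|tp] := eqVneq (cT a) 0.
      by rewrite ea t0 !scale0r !dotE !cE; ring.
    have tp' : 0 < cT a by rewrite lt_neqAle eq_sym tp ta.
    have Fu : F u by apply: (F_from_scaled hF tp'); rewrite -ea.
    by rewrite ea !dotZr -/u ku (hu Fu).
  have [l hl eb] := h2 _ Kb Fb.
  have [l0|lp] := eqVneq l 0.
    by rewrite eb l0 !scale0r !dotE !cE; ring.
  have lp' : 0 < l by rewrite lt_neqAle eq_sym lp hl.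
  have Fw : F w by apply: (F_from_scaled hF lp'); rewrite -eb.
  by rewrite eb !dotZr kw (hw' Fw).
have pos : forall v, F v -> 0 <= dotv y v by move=> v Fv; apply: hy.
case: (pselect (F u)) => Fu; case: (pselect (F w)) => Fw.
- apply: (sub (dotv y u) (dotv y w)); try by [].
  + exact: pos.
  + exact: pos.
  + by move=> ->.
- apply: (sub (dotv y u) 0) => //; first exact: pos.
  by move=> e; rewrite e in Fw.
- apply: (sub 0 (dotv y w)) => //; first exact: pos.
  by move=> e; rewrite e in Fw.
- by apply: (sub 0 0).
Qed.

Lemma main_k : exists k, dual_cone Kc k /\ forall f, F f -> dotv k f = dotv y f.
Proof.
case: (K1_class hF) => [h1|[c [d [hcd h1]]]]; case: (K2_class hF) => [h2|[w [hw h2]]].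
- exact: caseA.
- exact: caseB h1 h2.
- exact: caseC hcd h1 h2.
- exact: caseD hcd hw h1 h2.
Qed.

End Face.

Lemma K_nice : nice (@Kc R).
Proof.
move=> F hF; apply/seteqP; split => y.
  move=> hy; have [k [dk hk]] := main_k hF hy.
  exists k => //; exists (y - k); last by rewrite addrC subrK.
  by move=> f Ff; rewrite dotBl hk // subrr.
move=> [k dk [w ow <-]] f Ff.
rewrite dotDl (ow f Ff) addr0; apply: dk; exact: (F_K hF Ff).
Qed.

End Nice.


Theorem theorem5p3 :
  exists K : set 'rV[Rdefinitions.R]_4,
    closed_convex_cone K /\ nice K /\ ~ amenable K.
Proof.
exists (@Kc Rdefinitions.R); split.
  split; first exact: Kc_closed.
  by split; [exact: K_convex | exact: K_cone].
by split; [exact: K_nice | exact: not_amenable].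
Qed.
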